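(* For any signed graph $(G,\sigma)$, $\chi_c(G,\sigma)\le 2\chi_c(G)$, where $\chi_c(G)$ is the circular chromatic number of the underlying unsigned graph $G$.
   Context: A signed graph $(G,\sigma)$ is a finite graph $G$ (multiple edges allowed, no loops) with a signature $\sigma:E(G)\to\{+1,-1\}$. For real $r\ge 2$, $C^r$ is the circle of circumference $r$, $d_{C^r}(x,y)=\min\{|x-y|,r-|x-y|\}$, $\overline{x}=x+r/2\pmod r$. A circular $r$-coloring of $(G,\sigma)$ is $f:V(G)\to C^r$ with $d_{C^r}(f(u),f(v))\ge1$ for each positive edge $uv$ and $d_{C^r}(f(u),\overline{f(v)})\ge1$ for each negative edge $uv$; $\chi_c(G,\sigma)$ is the infimum of such $r\ge2$. For an unsigned graph $G$, a circular $r$-coloring requires $d_{C^r}(f(u),f(v))\ge1$ for every edge $uv$, and $\chi_c(G)$ is the infimum of such $r$. *)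

(* Defs.v *)
From mathcomp Require Import all_boot all_order all_algebra.
From mathcomp Require Import classical_sets reals.
Set Implicit Arguments. Unset Strict Implicit. Unset Printing Implicit Defensive.
Import Order.TTheory GRing.Theory Num.Theory.
Local Open Scope ring_scope.
Local Open Scope classical_set_scope.

(* A signed (multi)graph: vertex type V, edge type E (finite), each edge e
   has endpoints (ends e).1, (ends e).2 (distinct: no loops, checked by the
   theorem hypothesis), and sign [sigma e] (true = +1, false = -1).
   Parallel edges are allowed since distinct edges may share endpoints. *)

Section Circ.
Variable R : realType.

(* points of the circle C^r are represented by reals in [0, r) *)
Definition onC (r x : R) : Prop := 0 <= x /\ x < r.

Definition dC (r x y : R) : R := Num.min `|x - y| (r - `|x - y|).

Definition antip (r x : R) : R :=
  if x + r / 2 < r then x + r / 2 else x + r / 2 - r.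

Variables (V E : finType) (ends : E -> V * V).

Definition signed_circ_col (sigma : E -> bool) (r : R) (f : V -> R) : Prop :=
  (forall v, onC r (f v)) /\
  (forall e, if sigma e then 1 <= dC r (f (ends e).1) (f (ends e).2)
             else 1 <= dC r (f (ends e).1) (antip r (f (ends e).2))).

Definition circ_col (r : R) (f : V -> R) : Prop :=
  (forall v, onC r (f v)) /\
  (forall e, 1 <= dC r (f (ends e).1) (f (ends e).2)).

Definition chi_c_signed (sigma : E -> bool) : R :=
  inf [set r : R | 2 <= r /\ exists f, signed_circ_col sigma r f].

Definition chi_c : R :=
  inf [set r : R | 2 <= r /\ exists f, circ_col r f].

End Circ.

(* Main.v *)
Require Import Defs.
From mathcomp Require Import all_boot all_order all_algebra.
From mathcomp Require Import classical_sets reals.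
From mathcomp Require Import ring lra.
Import Order.TTheory GRing.Theory Num.Theory.
Local Open Scope ring_scope.

Lemma normcase {R : realType} (t : R) : (0 <= t /\ `|t| = t) \/ (t < 0 /\ `|t| = - t).
Proof.
have [t0|t0] := leP 0 t; [left; split => //; exact: ger0_norm|right; split => //; exact: ltr0_norm].
Qed.

Lemma dC_ge1 (R : realType) (r x y : R) : 1 <= `|x - y| -> 1 <= r - `|x - y| -> 1 <= dC r x y.
Proof. by move=> h1 h2; rewrite /dC le_min h1 h2. Qed.

Lemma dC_le1 (R : realType) (r x y : R) : 1 <= dC r x y -> 1 <= `|x - y| /\ 1 <= r - `|x - y|.
Proof. by rewrite /dC le_min => /andP[]. Qed.

Lemma double_pos (R : realType) (r x y : R) : 0 <= x < r -> 0 <= y < r ->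
  1 <= dC r x y -> 1 <= dC (2 * r) x y.
Proof.
move=> /andP[x0 xr] /andP[y0 yr] /dC_le1 [h1 h2]; apply: dC_ge1 => //.
case: (normcase (x - y)) h1 h2 => [][? ->] ? ?; lra.
Qed.

Lemma double_neg (R : realType) (r x y : R) : 0 <= x < r -> 0 <= y < r ->
  1 <= dC r x y -> 1 <= dC (2 * r) x (antip (2 * r) y).
Proof.
move=> /andP[x0 xr] /andP[y0 yr] /dC_le1 [h1 h2].
have -> : antip (2 * r) y = y + r.
  rewrite /antip.
  have -> : 2 * r / 2 = r by field.
  have -> : y + r < 2 * r by lra.
  by [].
apply: dC_ge1.
  case: (normcase (x - (y + r))) => [][? ->]; case: (normcase (x - y)) h1 h2 => [][? ->] ? ?; lra.
case: (normcase (x - (y + r))) => [][? ->]; case: (normcase (x - y)) h1 h2 => [][? ->] ? ?; lra.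
Qed.

Lemma constr (R : realType) (n a b : R) : 0 <= a -> 0 <= b -> a + 1 <= n -> b + 1 <= n ->
  (a + 1 <= b \/ b + 1 <= a) -> 1 <= dC (2 * n + 2) (2 * a) (2 * b).
Proof.
move=> a0 b0 an bn hab; apply: dC_ge1;
case: (normcase (2 * a - 2 * b)) => [][? ->]; case: hab => ?; lra.
Qed.

Lemma keyL {R : realType} (V E : finType) (ends : E -> V * V) (sigma : E -> bool) r :
  (2 <= r /\ exists f, circ_col (R:=R) ends r f) ->
  (2 <= 2 * r /\ exists f, signed_circ_col (R:=R) ends sigma (2 * r) f).
Proof.
  move=> [r2 [f [fon fe]]]; split; first lra.
  exists f; split.
    move=> v; case: (fon v) => ? ?; split; lra.
  move=> e; have h := fe e.
  case: (fon (ends e).1) => ? ?; case: (fon (ends e).2) => ? ?.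
  case: (sigma e).
    by apply: double_pos => //; apply/andP; split.
  by apply: double_neg => //; apply/andP; split.
Time Qed.

Lemma neL (R : realType) (V E : finType) (ends : E -> V * V)
  (noloop : forall e, (ends e).1 != (ends e).2) :
  exists r : R, (2 <= r /\ exists f, circ_col (R:=R) ends r f).
Proof.
  exists (2 * (#|V|)%:R + 2); split.
    have : (0 : R) <= (#|V|)%:R by rewrite ler0n.
    lra.
  exists (fun v => 2 * (enum_rank v : nat)%:R); split.
    move=> v.
    have : ((enum_rank v : nat)%:R + 1 <= (#|V|)%:R :> R).
      by rewrite natr1 ler_nat.
    have : (0 : R) <= (enum_rank v : nat)%:R by rewrite ler0n.
    rewrite /onC; move=> ? ?; split; lra.
  move=> e; apply: constr; try by rewrite ler0n.
      by rewrite natr1 ler_nat ltn_ord.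
    by rewrite natr1 ler_nat ltn_ord.
  have hne : (enum_rank (ends e).1 : nat) != (enum_rank (ends e).2 : nat).
    apply: contra (noloop e) => /eqP h.
    by apply/eqP; apply: enum_rank_inj; apply: val_inj.
  case: (ltngtP (enum_rank (ends e).1) (enum_rank (ends e).2)) => h.
  - by left; rewrite natr1 ler_nat.
  - by right; rewrite natr1 ler_nat.
  - by rewrite h eqxx in hne.
Time Qed.

Theorem lemma5 (R : realType) (V E : finType) (ends : E -> V * V)
  (noloop : forall e, (ends e).1 != (ends e).2) (sigma : E -> bool) :
  chi_c_signed R ends sigma <= 2 * chi_c R ends.
Proof.
have hlb : has_lbound [set r : R | 2 <= r /\ exists f, signed_circ_col ends sigma r f]%classic.
  by exists 2 => y [].
have hS : forall r, (2 <= r /\ exists f, circ_col (R:=R) ends r f) ->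
    chi_c_signed R ends sigma / 2 <= r.
  move=> r Gr; have := ge_inf hlb (@keyL R V E ends sigma r Gr).
  rewrite -/(chi_c_signed R ends sigma) => ?; lra.
have : chi_c_signed R ends sigma / 2 <= chi_c R ends.
  apply: lb_le_inf; first exact: neL.
  exact: hS.
lra.
Time Qed.
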